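(* Let $k\ge2$ and let $r=(r_{ij})$ be a maximally-connected coupling of the 1-2 system of $(R^1,R^2)$. Suppose $r_{ij}>0$ for some $i\neq j$. If $p_i+p_j\le q_i+q_j$, then $r_{ab}=0$ for all $a\ne b$ with $b\neq j$ (all nonzero off-diagonal entries lie in column $j$). If $p_i+p_j\ge q_i+q_j$, then $r_{ab}=0$ for all $a\ne b$ with $a\neq i$ (all nonzero off-diagonal entries lie in row $i$).
   Context: Let $R^1,R^2$ be two stochastically unrelated random variables with values in $\{1,\dots,k\}$, $\Pr[R^1=i]=p_i$, $\Pr[R^2=i]=q_i$, where $p_i,q_i\ge0$ and $\sum_i p_i=\sum_i q_i=1$. A maximally-connected coupling of the 1-2 system is a $k\times k$ matrix $r=(r_{ij})$ of nonnegative reals such that: $\sum_j r_{ij}=p_i$ and $\sum_i r_{ij}=q_j$ for all $i,j$; $r_{ii}=\min(p_i,q_i)$ for all $i$; and $r_{ii}+r_{ij}+r_{ji}+r_{jj}=\min(p_i+p_j,q_i+q_j)$ for all $i<j$. *)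

(* Defs.v *)
From HB Require Import structures.
From mathcomp Require Import all_boot all_order all_algebra.
Set Implicit Arguments. Unset Strict Implicit. Unset Printing Implicit Defensive.
Import Order.TTheory GRing.Theory Num.Theory.
Local Open Scope ring_scope.

Definition is_distr (R : realFieldType) (k : nat) (p : 'I_k -> R) : Prop :=
  (forall i, 0 <= p i) /\ \sum_(i < k) p i = 1.

Definition max_connected_coupling (R : realFieldType) (k : nat)
    (p q : 'I_k -> R) (r : 'I_k -> 'I_k -> R) : Prop :=
  [/\ (forall i j, 0 <= r i j),
      (forall i, \sum_(j < k) r i j = p i),
      (forall j, \sum_(i < k) r i j = q j),
      (forall i, r i i = Num.min (p i) (q i))
    & (forall i j : 'I_k, (i < j)%N ->
         r i i + r i j + r j i + r j j = Num.min (p i + p j) (q i + q j))].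

(* Main.v *)
Require Import Defs.
From HB Require Import structures.
From mathcomp Require Import all_boot all_order all_algebra.
From mathcomp Require Import lra.
Import Order.TTheory GRing.Theory Num.Theory.
Local Open Scope ring_scope.

Lemma two_le_sum (R : realFieldType) (k : nat) (f : 'I_k -> R) (P : pred 'I_k) x y :
  (forall c, 0 <= f c) -> x != y -> P x -> P y -> f x + f y <= \sum_(c | P c) f c.
Proof.
move=> f0 xy Px Py.
rewrite (bigD1 x) //= (bigD1 y) /=; last by rewrite Py eq_sym xy.
rewrite addrA lerDl; apply: sumr_ge0 => c _; exact: f0.
Qed.

Lemma one_le_sum (R : realFieldType) (k : nat) (f : 'I_k -> R) (P : pred 'I_k) x :
  (forall c, 0 <= f c) -> P x -> f x <= \sum_(c | P c) f c.
Proof.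
move=> f0 Px.
rewrite (bigD1 x) //= lerDl; apply: sumr_ge0 => c _; exact: f0.
Qed.

Section S.
Variables (R : realFieldType) (k : nat) (p q : 'I_k -> R) (r : 'I_k -> 'I_k -> R).
Hypothesis H : max_connected_coupling p q r.

Lemma offrow a : \sum_(b | b != a) r a b = p a - Num.min (p a) (q a).
Proof.
case: H => _ Hr _ Hd _.
have := Hr a; rewrite (bigD1 a) //= Hd; set m := Num.min _ _; set s := \sum_(_ < _ | _) _; move=> e; rewrite -e; by rewrite addrC addrK.
Qed.

Lemma offcol b : \sum_(a | a != b) r a b = q b - Num.min (p b) (q b).
Proof.
case: H => _ _ Hc Hd _.
have := Hc b; rewrite (bigD1 b) //= Hd; set m := Num.min _ _; set s := \sum_(_ < _ | _) _; move=> e; rewrite -e; by rewrite addrC addrK.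
Qed.

Lemma pairr a b : a != b ->
  r a a + r a b + r b a + r b b = Num.min (p a + p b) (q a + q b).
Proof.
case: H => _ _ _ _ Hp ab.
case: (ltngtP a b) => h.
- exact: Hp.
- have := Hp b a h => e.
  rewrite [p a + _]addrC [q a + _]addrC -e; lra.
- by move/val_inj: h => h; rewrite h eqxx in ab.
Qed.

Lemma offpos a b : a != b -> 0 < r a b -> q a < p a /\ p b < q b.
Proof.
case: H => H0 _ _ _ _ ab rab; split.
- have := @one_le_sum _ _ (r a) (fun c => c != a) b (H0 a).
  rewrite eq_sym ab offrow => /(_ isT) h.
  case: (leP (p a) (q a)) => hh //.
  move: h; rewrite /Num.min; case: ifP => _; lra.
- have := @one_le_sum _ _ (fun c => r c b) (fun c => c != b) a (fun c => H0 c b).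
  rewrite ab offcol => /(_ isT) h.
  case: (leP (q b) (p b)) => hh //.
  move: h; rewrite /Num.min; case: ifP => _; lra.
Qed.

Lemma rowzero a b : p a <= q a -> a != b -> r a b = 0.
Proof.
move=> hle ab; case: H => H0 _ _ _ _.
have := offrow a; rewrite min_l //.
rewrite subrr => /eqP; rewrite psumr_eq0; last by move=> c _; exact: H0.
by move/allP => /(_ b (mem_index_enum _)); rewrite eq_sym ab /= => /eqP.
Qed.

Lemma val a b : q a < p a -> p b < q b ->
  r a b = Num.min (p a - q a) (q b - p b).
Proof.
move=> ha hb.
have ab : a != b by apply/eqP => e; subst; lra.
have rba : r b a = 0 by apply: (@rowzero b a (ltW hb)); rewrite eq_sym.
have := @pairr a b ab. case: H => _ _ _ Hd _.
rewrite rba !Hd /Num.min.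
case: ifP => h1; case: ifP => h2; case: ifP => h3; case: ifP => h4; lra.
Qed.
End S.
Arguments offpos {R k p q r}.
Arguments val {R k p q r}.
Arguments offrow {R k p q r}.
Arguments offcol {R k p q r}.

Theorem mainTheorem7 (R : realFieldType) (k : nat) (p q : 'I_k -> R)
    (r : 'I_k -> 'I_k -> R) (i j : 'I_k) :
  (2 <= k)%N ->
  is_distr p -> is_distr q ->
  max_connected_coupling p q r ->
  i != j -> 0 < r i j ->
  (p i + p j <= q i + q j ->
     forall a b : 'I_k, a != b -> b != j -> r a b = 0) /\
  (q i + q j <= p i + p j ->
     forall a b : 'I_k, a != b -> a != i -> r a b = 0).
Proof.
move=> _ _ _ H ij rij.
have H0 : forall a b, 0 <= r a b by case: H.
have [di dj] := offpos H i j ij rij.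
have rijv := val H i j di dj.
split=> hle a b ab hb; apply/eqP; rewrite eq_le H0 andbT; apply/negP => /negP;
  rewrite -ltNge => rab; have [da db] := offpos H a b ab rab.
- have bi : b != i by apply/eqP => e; subst; lra.
  have rib := val H i b di db.
  have := @two_le_sum _ _ (r i) (fun c => c != i) j b (H0 i).
  rewrite eq_sym hb eq_sym ij bi (offrow H) => /(_ isT isT isT).
  move: rijv rib; rewrite /Num.min.
  case: ifP => h1; case: ifP => h2; case: ifP => h3; lra.
- have aj : a != j by apply/eqP => e; subst; lra.
  have raj := val H a j da dj.
  have := @two_le_sum _ _ (fun c => r c j) (fun c => c != j) i a (fun c => H0 c j).
  rewrite ij aj eq_sym hb (offcol H) => /(_ isT isT isT).
  move: rijv raj; rewrite /Num.min.
  case: ifP => h1; case: ifP => h2; case: ifP => h3; lra.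
Qed.
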